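(* Let $\mathbf R_s\in\mathcal R([e,\ell];\theta_s)$ for all $s\in\mathcal S$. Consider the mixed-integer linear program: minimize $\delta$ over $\delta\ge 0$, $\bm a_s\in\mathcal X(\mathbf R_s,[e,\ell];\theta_s)$ ($s\in\mathcal S$), and, for each $i\in V_{\mathrm{disc}}$, variables $\bar\mu_i,\underline\mu_i\ge0$ and $z_{ib}\in\{0,1\}$ ($b=1,\dots,N_i$), subject to: $\sum_{b=1}^{N_i}z_{ib}=1$ for each $i\in V_{\mathrm{disc}}$; for all $i\in V_{\mathrm{disc}}$, $s\in\mathcal S$, $b\in\{1,\dots,N_i\}$: $z_{ib}=1\Rightarrow \bar\mu_i\ge a_{si}-\bar y_{ib}$ and $z_{ib}=1\Rightarrow\underline\mu_i\ge \underline y_{ib}-a_{si}$; $\delta\ge a_{s_1i}-a_{s_2i}-w_i$ for all $i\in V_{\mathrm{cont}}$ and $(s_1,s_2)\in\mathcal S\times\mathcal S$; and $\delta\ge\sum_{i\in V_{\mathrm{disc}}}(\bar\mu_i+\underline\mu_i)$. Then this problem attains its minimum, and its optimal value equals $0$ if and only if there exist $\bm a_s\in\mathcal X(\mathbf R_s,[e,\ell];\theta_s)$, $s\in\mathcal S$, satisfying: (i) for every $i\in V_{\mathrm{cont}}$ and $\beta\in\mathbb R$: either $a_{si}\le\beta+w_i/2$ for all $s$, or $a_{si}\ge\beta-w_i/2$ for all $s$; and (ii) for every $i\in V_{\mathrm{disc}}$ and $b\in\{1,\dots,N_i-1\}$: either $a_{si}\le\bar y_{ib}$ for all $s$, or $a_{si}\ge\underline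 y_{i,b+1}$ for all $s$.
   Context: Let $G=(V,A)$ be a directed graph with $V=\{0,1,\dots,n\}$; node $0$ is the depot and $V_C=V\setminus\{0\}$ is the set of customers. The depot has operating window $[e_0,\ell_0]$, vehicles have capacity $Q$, and each customer $i\in V_C$ has an exogenous time window $[e_i,\ell_i]$. A vector of operational parameters $\theta$ consists of arc costs $c_{ij}\ge 0$ and arc travel times $t_{ij}\ge0$ for $(i,j)\in A$, and demands $q_i\ge 0$ and service times $u_i\ge 0$ for $i\in V_C$. The customer set is partitioned as $V_C=V_{\mathrm{cont}}\cup V_{\mathrm{disc}}$ (disjoint). For $i\in V_{\mathrm{cont}}$ a width $w_i\ge0$ with $e_i\le \ell_i-w_i$ is given and $TW_i=\{[y,y+w_i]: e_i\le y\le \ell_i-w_i\}$. For $i\in V_{\mathrm{disc}}$, $TW_i=\{[\underline y_{i1},\bar y_{i1}],\dots,[\underline y_{iN_i},\bar y_{iN_i}]\}$ is a finite set of intervals with $\underline y_{ib}\le\bar y_{ib}$, none contained in another, ordered so that $e_i=\underline y_{i1}<\dots<\underline y_{iN_i}$ and $\bar y_{i1}<\dots<\bar y_{iN_i}=\ell_i$. A route set $\mathbf R=(R_1,\dots,R_m)$ is a collection of pairwise disjoint nonempty sequences $R_k=(R_{k,1},\dots,R_{k,n_k})$ of distinct customers (every customer with positive demand appearing in exactly one sequence). For a vector $\tau=(\tau_1,\dots,\tau_n)$ of closed intervals, $\mathcal X(\mathbf R,\tau;\theta)$ is the set of $\bm a\in\mathbb R^n_{\ge0}$ with: $a_{R_{k,1}}\ge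 e_0+t_{0,R_{k,1}}$ for all $k$; $a_{R_{k,l+1}}-a_{R_{k,l}}\ge t_{R_{k,l},R_{k,l+1}}+u_{R_{k,l}}$ for all $k$ and $1\le l\le n_k-1$; $a_{R_{k,n_k}}\le \ell_0-t_{R_{k,n_k},0}-u_{R_{k,n_k}}$ for all $k$; and $a_i\in\tau_i$ for all $i\in V_C$. We write $\mathbf R\in\mathcal R(\tau;\theta)$ if $\sum_{i\in R_k}q_i\le Q$ for every $k$ and $\mathcal X(\mathbf R,\tau;\theta)\neq\emptyset$. Finitely many scenarios $\theta_1,\dots,\theta_S$ are given, $\mathcal S=\{1,\dots,S\}$. $[e,\ell]$ denotes the vector $([e_1,\ell_1],\dots,[e_n,\ell_n])$, and $a_{si}$ denotes the $i$-th component of $\bm a_s$. *)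

(* Defs.v *)
From Stdlib Require Import Reals List.
Import ListNotations.
Open Scope R_scope.

(* Customers are the nodes 1..n; node 0 is the depot. *)
Definition is_cust (n i : nat) : Prop := (1 <= i <= n)%nat.

Record param := mkParam {
  cost  : nat -> nat -> R;
  ttime : nat -> nat -> R;
  dem   : nat -> R;
  serv  : nat -> R }.

Definition param_ok (n : nat) (th : param) : Prop :=
  (forall i j, (i <= n)%nat -> (j <= n)%nat -> 0 <= cost th i j /\ 0 <= ttime th i j) /\
  (forall i, is_cust n i -> 0 <= dem th i /\ 0 <= serv th i).

Definition sumR (l : list R) : R := fold_right Rplus 0 l.

Definition route_set (n : nat) (q : nat -> R) (Rs : list (list nat)) : Prop :=
  (forall r, In r Rs -> r <> []) /\
  (forall r i, In r Rs -> In i r -> is_cust n i) /\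
  NoDup (concat Rs) /\
  (forall i, is_cust n i -> 0 < q i -> In i (concat Rs)).

Fixpoint chain_ok (th : param) (a : nat -> R) (r : list nat) : Prop :=
  match r with
  | x :: ((y :: _) as r') =>
      a y - a x >= ttime th x y + serv th x /\ chain_ok th a r'
  | _ => True
  end.

Definition route_ok (e0 l0 : R) (th : param) (a : nat -> R) (r : list nat) : Prop :=
  match r with
  | [] => True
  | x :: _ =>
      a x >= e0 + ttime th 0%nat x /\
      chain_ok th a r /\
      a (last r 0%nat) <= l0 - ttime th (last r 0%nat) 0%nat - serv th (last r 0%nat)
  end.

(* a in X(R, tau; theta), with tau_i = [lo i, hi i]; a is indexed by customers 1..n *)
Definition inX (n : nat) (e0 l0 : R) (th : param) (Rs : list (list nat))
  (lo hi : nat -> R) (a : nat -> R) : Prop :=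
  (forall i, is_cust n i -> 0 <= a i) /\
  (forall r, In r Rs -> route_ok e0 l0 th a r) /\
  (forall i, is_cust n i -> lo i <= a i <= hi i).

Definition in_calR (n : nat) (Q e0 l0 : R) (th : param) (lo hi : nat -> R)
  (Rs : list (list nat)) : Prop :=
  route_set n (dem th) Rs /\
  (forall r, In r Rs -> sumR (map (dem th) r) <= Q) /\
  exists a, inX n e0 l0 th Rs lo hi a.

(* Time-window data: disc i = true iff i in V_disc (else i in V_cont).
   w i : width for continuous customers; N i, ylo i b, yhi i b (b = 1..N i)
   for discrete customers. *)
Definition tw_ok (n : nat) (e l : nat -> R) (disc : nat -> bool) (w : nat -> R)
  (N : nat -> nat) (ylo yhi : nat -> nat -> R) : Prop :=
  (forall i, is_cust n i -> disc i = false -> 0 <= w i /\ e i <= l i - w i) /\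
  (forall i, is_cust n i -> disc i = true ->
     (1 <= N i)%nat /\
     (forall b, (1 <= b <= N i)%nat -> ylo i b <= yhi i b) /\
     (forall b b', (1 <= b)%nat -> (b < b')%nat -> (b' <= N i)%nat ->
        ylo i b < ylo i b' /\ yhi i b < yhi i b') /\
     e i = ylo i 1%nat /\ yhi i (N i) = l i).

Definition is_scen (S s : nat) : Prop := (1 <= s <= S)%nat.

Definition milp_feasible (n : nat) (e0 l0 : R) (e l : nat -> R)
  (disc : nat -> bool) (w : nat -> R) (N : nat -> nat) (ylo yhi : nat -> nat -> R)
  (S : nat) (theta : nat -> param) (Rs : nat -> list (list nat))
  (delta : R) (a : nat -> nat -> R) (muhi mulo : nat -> R) (z : nat -> nat -> R) : Prop :=
  0 <= delta /\
  (forall s, is_scen S s -> inX n e0 l0 (theta s) (Rs s) e l (a s)) /\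
  (forall i, is_cust n i -> disc i = true ->
     0 <= muhi i /\ 0 <= mulo i /\
     (forall b, (1 <= b <= N i)%nat -> z i b = 0 \/ z i b = 1) /\
     sumR (map (z i) (seq 1 (N i))) = 1) /\
  (forall i s b, is_cust n i -> disc i = true -> is_scen S s -> (1 <= b <= N i)%nat ->
     z i b = 1 -> muhi i >= a s i - yhi i b) /\
  (forall i s b, is_cust n i -> disc i = true -> is_scen S s -> (1 <= b <= N i)%nat ->
     z i b = 1 -> mulo i >= ylo i b - a s i) /\
  (forall i s1 s2, is_cust n i -> disc i = false -> is_scen S s1 -> is_scen S s2 ->
     delta >= a s1 i - a s2 i - w i) /\
  delta >= sumR (map (fun i => muhi i + mulo i) (filter disc (seq 1 n))).

Definition consistent (n : nat) (disc : nat -> bool) (w : nat -> R) (N : nat -> nat)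
  (ylo yhi : nat -> nat -> R) (S : nat) (a : nat -> nat -> R) : Prop :=
  (forall i, is_cust n i -> disc i = false -> forall beta : R,
     (forall s, is_scen S s -> a s i <= beta + w i / 2) \/
     (forall s, is_scen S s -> a s i >= beta - w i / 2)) /\
  (forall i, is_cust n i -> disc i = true -> forall b, (1 <= b <= N i - 1)%nat ->
     (forall s, is_scen S s -> a s i <= yhi i b) \/
     (forall s, is_scen S s -> a s i >= ylo i (Datatypes.S b))).

(* Main.v *)
Require Import Defs.
From Stdlib Require Import Reals List Lra Lia Classical IndefiniteDescription.
Import ListNotations.
Open Scope R_scope.

Definition maxl (l : list R) : R := fold_right Rmax 0 l.
Definition minl (b : R) (l : list R) : R := fold_right Rmin b l.

Definition Cpart (n : nat) (disc : nat -> bool) (w : nat -> R) (S : nat) (a : nat -> nat -> R) : R :=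
  maxl (map (fun i => maxl (map (fun s1 => maxl (map (fun s2 => a s1 i - a s2 i - w i)
     (seq 1 S))) (seq 1 S))) (filter (fun i => negb (disc i)) (seq 1 n))).
Definition hib (S : nat) (ylo yhi : nat -> nat -> R) (a : nat -> nat -> R) (i b : nat) : R :=
  maxl (map (fun s => a s i - yhi i b) (seq 1 S)) + maxl (map (fun s => ylo i b - a s i) (seq 1 S)).
Definition gi (S : nat) (N : nat -> nat) (ylo yhi : nat -> nat -> R) (a : nat -> nat -> R) (i : nat) : R :=
  minl (hib S ylo yhi a i 1) (map (hib S ylo yhi a i) (seq 1 (N i))).
Definition Dpart (n : nat) (disc : nat -> bool) (N : nat -> nat) (ylo yhi : nat -> nat -> R) (S : nat)
  (a : nat -> nat -> R) : R :=
  sumR (map (gi S N ylo yhi a) (filter disc (seq 1 n))).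
Definition Fval (n : nat) (disc : nat -> bool) (w : nat -> R) (N : nat -> nat) (ylo yhi : nat -> nat -> R)
  (S : nat) (a : nat -> nat -> R) : R :=
  Rmax (Cpart n disc w S a) (Dpart n disc N ylo yhi S a).

Lemma fchoice {A B : Type} (P : A -> B -> Prop) :
  (forall x, exists y, P x y) -> exists f, forall x, P x (f x).
Proof.
intros H. exists (fun x => proj1_sig (constructive_indefinite_description _ (H x))).
intro x. exact (proj2_sig (constructive_indefinite_description _ (H x))).
Qed.

Lemma maxl_ge0 l : 0 <= maxl l.
Proof. induction l; simpl. lra. eapply Rle_trans; [exact IHl| apply Rmax_r]. Qed.

Lemma maxl_le l c : (forall x, In x l -> x <= c) -> 0 <= c -> maxl l <= c.
Proof.
induction l as [|x l IH]; simpl; intros H Hc; auto.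
apply Rmax_lub; auto.
Qed.

Lemma le_maxl l x : In x l -> x <= maxl l.
Proof.
induction l as [|y l IH]; simpl; intros H; [contradiction|].
destruct H as [<-|H]. apply Rmax_l. eapply Rle_trans; [apply IH; auto| apply Rmax_r].
Qed.

Lemma minl_le b l x : In x l -> minl b l <= x.
Proof.
induction l as [|y l IH]; simpl; intros H; [contradiction|].
destruct H as [<-|H]. apply Rmin_l. eapply Rle_trans; [apply Rmin_r| apply IH; auto].
Qed.

Lemma minl_att (h : nat -> R) b0 L :
  exists k, (k = b0 \/ In k L) /\ minl (h b0) (map h L) = h k.
Proof.
induction L as [|x L IH]; simpl.
- exists b0; auto.
- destruct IH as [k [Hk Heq]]. rewrite Heq.
  destruct (Rle_dec (h x) (h k)).
  + exists x. split; auto. apply Rmin_left; auto.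
  + exists k. split. destruct Hk; auto. apply Rmin_right; lra.
Qed.

Lemma sum_le {A : Type} (f g : A -> R) l :
  (forall x, In x l -> f x <= g x) -> sumR (map f l) <= sumR (map g l).
Proof.
induction l as [|x l IH]; simpl; intros H. lra.
apply Rplus_le_compat; auto.
Qed.

Lemma sum_ge0 {A : Type} (f : A -> R) l :
  (forall x, In x l -> 0 <= f x) -> 0 <= sumR (map f l).
Proof.
induction l as [|x l IH]; simpl; intros H. lra.
assert (0 <= f x) by auto. assert (0 <= sumR (map f l)) by auto. lra.
Qed.

Lemma sum_nonneg_zero {A : Type} (f : A -> R) l :
  (forall x, In x l -> 0 <= f x) -> sumR (map f l) <= 0 -> forall x, In x l -> f x <= 0.
Proof.
induction l as [|y l IH]; simpl; intros H Hs x Hx; [contradiction|].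
assert (0 <= f y) by auto. assert (0 <= sumR (map f l)) by (apply sum_ge0; auto).
destruct Hx as [<-|Hx]. lra. apply IH; auto. lra.
Qed.

Lemma sum_zero {A : Type} (l : list A) : sumR (map (fun _ => 0) l) = 0.
Proof. induction l; simpl; auto. rewrite IHl; lra. Qed.

Lemma sum_ind_notin k L :
  ~ In k L -> sumR (map (fun b => if Nat.eqb b k then 1 else 0) L) = 0.
Proof.
induction L as [|x L IH]; simpl; intros H; auto.
destruct (Nat.eqb_spec x k). exfalso; auto. rewrite IH; auto. lra.
Qed.

Lemma sum_ind_in k L :
  NoDup L -> In k L -> sumR (map (fun b => if Nat.eqb b k then 1 else 0) L) = 1.
Proof.
induction L as [|x L IH]; simpl; intros Hd H; [contradiction|].
inversion Hd; subst.
destruct (Nat.eqb_spec x k).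
- subst. rewrite sum_ind_notin; auto. lra.
- destruct H as [H|H]; [congruence|]. rewrite IH; auto. lra.
Qed.

Lemma sum01_exists (z : nat -> R) L :
  (forall b, In b L -> z b = 0 \/ z b = 1) -> sumR (map z L) = 1 -> exists b, In b L /\ z b = 1.
Proof.
induction L as [|x L IH]; simpl; intros H Hs. lra.
destruct (H x (or_introl eq_refl)) as [H0|H1].
- destruct IH as [b [Hb Hzb]]; auto. lra. exists b; auto.
- exists x; auto.
Qed.

Lemma last_in x r : In (last (x :: r) 0%nat) (x :: r).
Proof.
revert x; induction r as [|y r IH]; intros x. simpl; auto.
change (In (last (y :: r) 0%nat) (x :: y :: r)). right. apply IH.
Qed.

Lemma chain_ext th (a b : nat -> R) r :
  (forall i, In i r -> a i = b i) -> chain_ok th a r -> chain_ok th b r.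
Proof.
induction r as [|x r IH]; simpl; auto.
destruct r as [|y r']; auto. intros Hab [H1 H2]. split.
- rewrite <- (Hab x), <- (Hab y); simpl; auto.
- apply IH; [intros; apply Hab; simpl; auto | exact H2].
Qed.

Lemma inX_ext n e0 l0 th q Rs lo hi (a b : nat -> R) :
  route_set n q Rs -> inX n e0 l0 th Rs lo hi a -> (forall i, is_cust n i -> a i = b i) ->
  inX n e0 l0 th Rs lo hi b.
Proof.
intros (_ & Hrc & _) (H1 & H2 & H3) Hab. split; [|split].
- intros i Hi. rewrite <- Hab; auto.
- intros r Hr. specialize (H2 r Hr). destruct r as [|x r']; simpl in *; auto.
  destruct H2 as (Ha & Hc & Hl).
  assert (Hin : forall i, In i (x :: r') -> a i = b i) by (intros; apply Hab; eapply Hrc; eauto).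
  split; [|split].
  + rewrite <- Hab; auto. eapply Hrc; eauto. simpl; auto.
  + apply (chain_ext th a b (x :: r')); auto.
  + rewrite <- Hin; auto. apply last_in.
- intros i Hi. rewrite <- Hab; auto.
Qed.

Lemma hib_ext S ylo yhi (a b : nat -> nat -> R) i k :
  (forall s, (1 <= s <= S)%nat -> a s i = b s i) -> hib S ylo yhi a i k = hib S ylo yhi b i k.
Proof.
intros H. unfold hib. f_equal; f_equal; apply map_ext_in; intros s Hs; apply in_seq in Hs;
rewrite H; auto; lia.
Qed.

Lemma F_ext n disc w N ylo yhi S (a b : nat -> nat -> R) :
  (forall s i, is_scen S s -> is_cust n i -> a s i = b s i) ->
  Fval n disc w N ylo yhi S a = Fval n disc w N ylo yhi S b.
Proof.
intros H. unfold Fval, Cpart, Dpart. f_equal.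
- f_equal. apply map_ext_in. intros i Hi. apply filter_In in Hi as [Hi _]. apply in_seq in Hi.
  f_equal. apply map_ext_in. intros s1 Hs1. apply in_seq in Hs1.
  f_equal. apply map_ext_in. intros s2 Hs2. apply in_seq in Hs2.
  rewrite (H s1 i), (H s2 i); unfold is_scen, is_cust; auto; lia.
- f_equal. apply map_ext_in. intros i Hi. apply filter_In in Hi as [Hi _]. apply in_seq in Hi.
  unfold gi. f_equal.
  + apply hib_ext. intros; apply H; unfold is_scen, is_cust; lia.
  + apply map_ext_in. intros k _. apply hib_ext. intros; apply H; unfold is_scen, is_cust; lia.
Qed.

Lemma F_ge0 n disc w N ylo yhi S a : 0 <= Fval n disc w N ylo yhi S a.
Proof. unfold Fval. eapply Rle_trans; [apply maxl_ge0| apply Rmax_l]. Qed.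

Lemma le_maxl_map {A : Type} (f : A -> R) L x : In x L -> f x <= maxl (map f L).
Proof. intros H. apply le_maxl. apply in_map. exact H. Qed.

Lemma feas_F n e0 l0 e l disc w N ylo yhi S theta Rs delta a muhi mulo z :
  milp_feasible n e0 l0 e l disc w N ylo yhi S theta Rs delta a muhi mulo z ->
  Fval n disc w N ylo yhi S a <= delta.
Proof.
intros (Hd & HX & Hdisc & Hhi & Hlo & Hcont & Hsum).
unfold Fval; apply Rmax_lub.
- unfold Cpart. apply maxl_le; [|lra]. intros x Hx1.
  apply in_map_iff in Hx1 as [i [<- Hi]]. apply filter_In in Hi as [Hi Hdi]. apply in_seq in Hi.
  apply maxl_le; [|lra]. intros y Hy. apply in_map_iff in Hy as [s1 [<- Hs1]]. apply in_seq in Hs1.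
  apply maxl_le; [|lra]. intros t Ht. apply in_map_iff in Ht as [s2 [<- Hs2]]. apply in_seq in Hs2.
  apply Rge_le, Hcont; unfold is_cust, is_scen; try lia.
  destruct (disc i); simpl in *; congruence.
- unfold Dpart. eapply Rle_trans; [|apply Rge_le, Hsum]. apply sum_le.
  intros i Hi. apply filter_In in Hi as [Hi Hdi]. apply in_seq in Hi.
  assert (Hc : is_cust n i) by (unfold is_cust; lia).
  destruct (Hdisc i Hc Hdi) as (Hmh & Hml & H01 & Hs1).
  destruct (sum01_exists (z i) (seq 1 (N i))) as [b [Hb Hzb]]; auto.
  { intros b Hb. apply in_seq in Hb. apply H01; lia. }
  apply in_seq in Hb.
  eapply Rle_trans. { unfold gi. apply minl_le. apply in_map. apply in_seq. exact Hb. }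
  unfold hib. apply Rplus_le_compat; apply maxl_le; auto; intros x Hx;
    apply in_map_iff in Hx as [s [<- Hs]]; apply in_seq in Hs; apply Rge_le.
  + apply (Hhi i s b); auto; unfold is_scen; lia.
  + apply (Hlo i s b); auto; unfold is_scen; lia.
Qed.

Lemma F_feas n e0 l0 e l disc w N ylo yhi S theta Rs a :
  tw_ok n e l disc w N ylo yhi ->
  (forall s, is_scen S s -> inX n e0 l0 (theta s) (Rs s) e l (a s)) ->
  exists muhi mulo z,
    milp_feasible n e0 l0 e l disc w N ylo yhi S theta Rs (Fval n disc w N ylo yhi S a) a muhi mulo z.
Proof.
intros Htw Ha.
assert (Hb : forall i, exists k, is_cust n i -> disc i = true ->
   (1 <= k <= N i)%nat /\ hib S ylo yhi a i k = gi S N ylo yhi a i).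
{ intro i. destruct (minl_att (hib S ylo yhi a i) 1 (seq 1 (N i))) as [k [Hk Heq]].
  exists k. intros Hc Hd. destruct Htw as [_ Htw2]. destruct (Htw2 i Hc Hd) as [HN _].
  split. destruct Hk as [->|Hk]; [lia| apply in_seq in Hk; lia].
  unfold gi; rewrite Heq; reflexivity. }
apply fchoice in Hb as [bs Hbs].
exists (fun i => maxl (map (fun s => a s i - yhi i (bs i)) (seq 1 S))),
       (fun i => maxl (map (fun s => ylo i (bs i) - a s i) (seq 1 S))),
       (fun i b => if Nat.eqb b (bs i) then 1 else 0).
unfold milp_feasible. split; [apply F_ge0|]. split; [exact Ha|]. split; [|split; [|split; [|split]]].
- intros i Hc Hd. destruct (Hbs i Hc Hd) as [Hr _].
  split; [apply maxl_ge0|]. split; [apply maxl_ge0|]. split.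
  + intros b _. destruct (Nat.eqb b (bs i)); auto.
  + apply sum_ind_in. apply seq_NoDup. apply in_seq. lia.
- intros i s b Hc Hd Hs Hb1 Hz. destruct (Nat.eqb_spec b (bs i)); [|lra]. subst.
  apply Rle_ge, le_maxl. apply in_map_iff. exists s; split; auto. apply in_seq. unfold is_scen in Hs; lia.
- intros i s b Hc Hd Hs Hb1 Hz. destruct (Nat.eqb_spec b (bs i)); [|lra]. subst.
  apply Rle_ge, le_maxl. apply in_map_iff. exists s; split; auto. apply in_seq. unfold is_scen in Hs; lia.
- intros i s1 s2 Hc Hd Hs1 Hs2. apply Rle_ge. unfold Fval. eapply Rle_trans; [|apply Rmax_l].
  unfold Cpart. unfold is_cust, is_scen in *.
  apply Rle_trans with (maxl (map (fun s1' => maxl (map (fun s2' => a s1' i - a s2' i - w i) (seq 1 S))) (seq 1 S))).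
  2: { apply (le_maxl_map (fun i => maxl (map (fun s1' => maxl (map (fun s2' => a s1' i - a s2' i - w i) (seq 1 S))) (seq 1 S)))).
       apply filter_In; split; [apply in_seq; lia| rewrite Hd; reflexivity]. }
  apply Rle_trans with (maxl (map (fun s2' => a s1 i - a s2' i - w i) (seq 1 S))).
  2: { apply (le_maxl_map (fun s1' => maxl (map (fun s2' => a s1' i - a s2' i - w i) (seq 1 S)))).
       apply in_seq; lia. }
  apply (le_maxl_map (fun s2' => a s1 i - a s2' i - w i)). apply in_seq; lia.
- apply Rle_ge. unfold Fval. eapply Rle_trans; [|apply Rmax_r]. unfold Dpart.
  right. f_equal. apply map_ext_in. intros i Hi. apply filter_In in Hi as [Hi Hdi]. apply in_seq in Hi.
  destruct (Hbs i) as [_ Heq]; [unfold is_cust; lia| exact Hdi|]. rewrite <- Heq. reflexivity.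
Qed.

Lemma feas0_cons n e0 l0 e l disc w N ylo yhi S theta Rs a muhi mulo z :
  tw_ok n e l disc w N ylo yhi ->
  milp_feasible n e0 l0 e l disc w N ylo yhi S theta Rs 0 a muhi mulo z ->
  consistent n disc w N ylo yhi S a.
Proof.
intros Htw (Hd & HX & Hdisc & Hhi & Hlo & Hcont & Hsum). split.
- intros i Hc Hdi beta.
  destruct (classic (forall s, is_scen S s -> a s i <= beta + w i / 2)) as [H|H]; [left; auto|right].
  apply not_all_ex_not in H as [s0 Hs0]. apply imply_to_and in Hs0 as [Hs0 Hgt].
  intros s Hs. specialize (Hcont i s0 s Hc Hdi Hs0 Hs). lra.
- intros i Hc Hdi b Hb.
  destruct (Hdisc i Hc Hdi) as (Hmh & Hml & H01 & Hs1).
  destruct (sum01_exists (z i) (seq 1 (N i))) as [b0 [Hb0 Hzb]]; auto.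
  { intros k Hk. apply in_seq in Hk. apply H01; lia. }
  apply in_seq in Hb0.
  assert (Hm : muhi i + mulo i <= 0).
  { apply (sum_nonneg_zero (fun i => muhi i + mulo i) (filter disc (seq 1 n))).
    - intros x Hx. apply filter_In in Hx as [Hx Hdx]. apply in_seq in Hx.
      destruct (Hdisc x) as (A1 & A2 & _); auto. unfold is_cust; lia. lra.
    - lra.
    - apply filter_In. split; auto. apply in_seq. unfold is_cust in Hc; lia. }
  assert (Hup : forall s, is_scen S s -> a s i <= yhi i b0).
  { intros s Hs. specialize (Hhi i s b0 Hc Hdi Hs ltac:(lia) Hzb). lra. }
  assert (Hdn : forall s, is_scen S s -> ylo i b0 <= a s i).
  { intros s Hs. specialize (Hlo i s b0 Hc Hdi Hs ltac:(lia) Hzb). lra. }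
  destruct Htw as [_ Htw2]. destruct (Htw2 i Hc Hdi) as (HN & Hle & Hord & He & Hl).
  destruct (Compare_dec.le_lt_dec b0 b) as [Hbb|Hbb].
  + left. intros s Hs. destruct (Nat.eq_dec b0 b) as [->|Hne]; [auto|].
    destruct (Hord b0 b) as [_ H2]; try lia. specialize (Hup s Hs). lra.
  + right. intros s Hs. apply Rle_ge. destruct (Nat.eq_dec (Datatypes.S b) b0) as [->|Hne]; [auto|].
    destruct (Hord (Datatypes.S b) b0) as [H2 _]; try lia. specialize (Hdn s Hs). lra.
Qed.

Lemma good_b n e l disc w N ylo yhi S (a : nat -> nat -> R) i :
  tw_ok n e l disc w N ylo yhi -> is_cust n i -> disc i = true ->
  (forall s, is_scen S s -> e i <= a s i <= l i) ->
  consistent n disc w N ylo yhi S a ->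
  exists b, (1 <= b <= N i)%nat /\ forall s, is_scen S s -> ylo i b <= a s i <= yhi i b.
Proof.
intros [_ Htw2] Hc Hd Hb [_ Hcons].
destruct (Htw2 i Hc Hd) as (HN & Hle & Hord & He & Hl).
assert (Hk : forall k, (1 <= k <= N i)%nat ->
  (exists b, (1 <= b <= k)%nat /\ forall s, is_scen S s -> ylo i b <= a s i <= yhi i b) \/
  (forall s, is_scen S s -> ylo i k <= a s i)).
{ induction k as [|k IH]; intros Hk; [lia|].
  destruct (Nat.eq_dec k 0) as [->|Hk0].
  - right. intros s Hs. rewrite <- He. apply Hb; auto.
  - destruct IH as [[b [Hb1 Hb2]]|IH]; [lia| |].
    + left. exists b. split; auto. lia.
    + destruct (Hcons i Hc Hd k ltac:(lia)) as [H|H].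
      * left. exists k. split; [lia|]. intros s Hs. split; auto.
      * right. intros s Hs. apply Rge_le; auto. }
destruct (Hk (N i) ltac:(lia)) as [[b [Hb1 Hb2]]|H].
- exists b. split; [lia|exact Hb2].
- exists (N i). split; [lia|]. intros s Hs. split; auto. rewrite Hl. apply Hb; auto.
Qed.

Lemma cons_F0 n e0 l0 e l disc w N ylo yhi S theta Rs a :
  tw_ok n e l disc w N ylo yhi ->
  (forall s, is_scen S s -> inX n e0 l0 (theta s) (Rs s) e l (a s)) ->
  consistent n disc w N ylo yhi S a ->
  Fval n disc w N ylo yhi S a <= 0.
Proof.
intros Htw Ha Hcons. unfold Fval. apply Rmax_lub.
- unfold Cpart. apply maxl_le; [|lra]. intros x Hx1.
  apply in_map_iff in Hx1 as [i [<- Hi]]. apply filter_In in Hi as [Hi Hdi]. apply in_seq in Hi.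
  apply maxl_le; [|lra]. intros y Hy. apply in_map_iff in Hy as [s1 [<- Hs1]]. apply in_seq in Hs1.
  apply maxl_le; [|lra]. intros t Ht. apply in_map_iff in Ht as [s2 [<- Hs2]]. apply in_seq in Hs2.
  destruct Hcons as [Hc1 _].
  assert (Hdf : disc i = false) by (destruct (disc i); simpl in *; congruence).
  destruct (Hc1 i ltac:(unfold is_cust; lia) Hdf ((a s1 i + a s2 i) / 2)) as [H|H].
  + specialize (H s1 ltac:(unfold is_scen; lia)). lra.
  + specialize (H s2 ltac:(unfold is_scen; lia)). lra.
- unfold Dpart. rewrite <- (sum_zero (filter disc (seq 1 n))). apply sum_le.
  intros i Hi. apply filter_In in Hi as [Hi Hdi]. apply in_seq in Hi.
  assert (Hc : is_cust n i) by (unfold is_cust; lia).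
  destruct (good_b n e l disc w N ylo yhi S a i Htw Hc Hdi) as [b [Hb Hg]]; auto.
  { intros s Hs. destruct (Ha s Hs) as (_ & _ & H3). apply H3; auto. }
  apply Rle_trans with (hib S ylo yhi a i b). { unfold gi. apply minl_le. apply in_map. apply in_seq. lia. }
  unfold hib. replace 0 with (0 + 0) by lra.
  apply Rplus_le_compat; apply maxl_le; try lra; intros x Hx;
    apply in_map_iff in Hx as [s [<- Hs]]; apply in_seq in Hs;
    destruct (Hg s ltac:(unfold is_scen; lia)); lra.
Qed.

Lemma main_from_min
  (n : nat) (e0 l0 Q : R) (e l : nat -> R)
  (disc : nat -> bool) (w : nat -> R) (N : nat -> nat) (ylo yhi : nat -> nat -> R)
  (S : nat) (theta : nat -> param) (Rs : nat -> list (list nat))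
  (Htw : tw_ok n e l disc w N ylo yhi)
  (Hmin : exists astar : nat -> nat -> R,
     (forall s, is_scen S s -> inX n e0 l0 (theta s) (Rs s) e l (astar s)) /\
     forall a, (forall s, is_scen S s -> inX n e0 l0 (theta s) (Rs s) e l (a s)) ->
       Fval n disc w N ylo yhi S astar <= Fval n disc w N ylo yhi S a) :
  exists dstar : R,
    (exists a muhi mulo z,
       milp_feasible n e0 l0 e l disc w N ylo yhi S theta Rs dstar a muhi mulo z) /\
    (forall delta a muhi mulo z,
       milp_feasible n e0 l0 e l disc w N ylo yhi S theta Rs delta a muhi mulo z ->
       dstar <= delta) /\
    (dstar = 0 <->
     exists a : nat -> nat -> R,
       (forall s, is_scen S s -> inX n e0 l0 (theta s) (Rs s) e l (a s)) /\
       consistent n disc w N ylo yhi S a).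
Proof.
destruct Hmin as [ast [Has Hm]].
exists (Fval n disc w N ylo yhi S ast). split; [|split; [|split]].
- destruct (F_feas n e0 l0 e l disc w N ylo yhi S theta Rs ast Htw Has) as (mh & ml & z & H).
  exists ast, mh, ml, z; exact H.
- intros delta a mh ml z Hf. eapply Rle_trans; [apply Hm|].
  + destruct Hf as (_ & Hx & _); exact Hx.
  + eapply feas_F; eauto.
- intros H0. exists ast. split; auto.
  destruct (F_feas n e0 l0 e l disc w N ylo yhi S theta Rs ast Htw Has) as (mh & ml & z & H).
  rewrite H0 in H. eapply feas0_cons; eauto.
- intros [a [Ha Hc]]. apply Rle_antisym.
  + eapply Rle_trans; [apply Hm; exact Ha|]. apply (cons_F0 n e0 l0 e l disc w N ylo yhi S theta Rs a Htw Ha Hc).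
  + apply F_ge0.
Qed.

Definition relc (S n : nat) (c : nat * nat) : bool :=
  andb (andb (Nat.leb 1 (fst c)) (Nat.leb (fst c) S)) (andb (Nat.leb 1 (snd c)) (Nat.leb (snd c) n)).

Lemma relc_true S n s i : is_scen S s -> is_cust n i -> relc S n (s, i) = true.
Proof.
unfold is_scen, is_cust, relc; cbn [fst snd]; intros [H1 H2] [H3 H4].
apply Nat.leb_le in H1, H2, H3, H4. rewrite H1, H2, H3, H4. reflexivity.
Qed.

Lemma relc_inv S n s i : relc S n (s, i) = true -> is_scen S s /\ is_cust n i.
Proof.
unfold is_scen, is_cust, relc; cbn [fst snd]; intros H.
apply andb_prop in H as [H H']. apply andb_prop in H as [H1 H2]. apply andb_prop in H' as [H3 H4].
apply Nat.leb_le in H1, H2, H3, H4. lia.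
Qed.

Definition trunc (S n : nat) (a : nat -> nat -> R) (c : nat * nat) : R :=
  if relc S n c then a (fst c) (snd c) else 0.

Definition boxP (S n : nat) (e l : nat -> R) (c : nat * nat) (x : R) : Prop :=
  if relc S n c then e (snd c) <= x <= l (snd c) else x = 0.

Definition XsetP n e0 l0 e l S (theta : nat -> param) (Rs : nat -> list (list nat))
  (p : nat * nat -> R) : Prop :=
  forall s, is_scen S s -> inX n e0 l0 (theta s) (Rs s) e l (fun i => p (s, i)).

Lemma trunc_ok n e0 l0 Q e l disc w N ylo yhi S theta Rs a :
  (forall s, is_scen S s -> in_calR n Q e0 l0 (theta s) e l (Rs s)) ->
  (forall s, is_scen S s -> inX n e0 l0 (theta s) (Rs s) e l (a s)) ->
  (forall c, boxP S n e l c (trunc S n a c)) /\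
  XsetP n e0 l0 e l S theta Rs (trunc S n a) /\
  Fval n disc w N ylo yhi S (fun s i => trunc S n a (s, i)) = Fval n disc w N ylo yhi S a.
Proof.
intros HR Ha. split; [|split].
- intros [s i]. unfold boxP, trunc. destruct (relc S n (s, i)) eqn:E; auto.
  apply relc_inv in E as [Hs Hi]. destruct (Ha s Hs) as (_ & _ & H3). apply H3; auto.
- intros s Hs. destruct (HR s Hs) as (Hrs & _). apply (inX_ext _ _ _ _ _ _ _ _ (a s) _ Hrs (Ha s Hs)).
  intros i Hi. unfold trunc. rewrite relc_true; auto.
- apply F_ext. intros s i Hs Hi. unfold trunc. rewrite relc_true; auto.
Qed.

Lemma init_point n e0 l0 Q e l S theta Rs :
  (forall s, is_scen S s -> in_calR n Q e0 l0 (theta s) e l (Rs s)) ->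
  exists a : nat -> nat -> R, forall s, is_scen S s -> inX n e0 l0 (theta s) (Rs s) e l (a s).
Proof.
intros HR.
assert (H : forall s, exists a : nat -> R, is_scen S s -> inX n e0 l0 (theta s) (Rs s) e l a).
{ intros s. destruct (classic (is_scen S s)) as [Hs|Hs].
  - destruct (HR s Hs) as (_ & _ & a & Ha). exists a; auto.
  - exists (fun _ => 0). intro; contradiction. }
apply fchoice in H as [a Ha]. exists a; auto.
Qed.

From HB Require Import structures.
From mathcomp Require Import all_boot all_order all_algebra.
From mathcomp Require Import all_classical all_reals.
From mathcomp Require Import topology normedtype derive.
From mathcomp Require Import Rstruct Rstruct_topology.
Import Order.TTheory GRing.Theory Num.Theory.
Import ArrowAsProduct.
Local Open Scope classical_set_scope.

Definition PT := (nat * nat)%type -> R.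

Lemma RmaxE x y : Rmax x y = Num.max x y.
Proof.
rewrite /Rmax; case: Rle_dec => H.
  by rewrite max_r //; apply/RleP.
by rewrite max_l //; apply/RleP; apply: Rlt_le; apply: Rnot_le_lt.
Qed.
Lemma RminE x y : Rmin x y = Num.min x y.
Proof.
rewrite /Rmin; case: Rle_dec => H.
  by rewrite min_l //; apply/RleP.
by rewrite min_r //; apply/RleP; apply: Rlt_le; apply: Rnot_le_lt.
Qed.

Lemma cproj (c : nat * nat) : continuous (fun p : PT => p c).
Proof. exact: (@proj_continuous _ (fun _ => R) c). Qed.
Lemma cRmax (g h : PT -> R) : continuous g -> continuous h -> continuous (fun p => Rmax (g p) (h p)).
Proof.
move=> cg ch x. have := (@continuous_max R PT g h x (cg x) (ch x)).
by rewrite (_ : (fun p => Rmax (g p) (h p)) = (g \max h)%R) //; apply/funext => p; rewrite RmaxE.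
Qed.
Lemma cRmin (g h : PT -> R) : continuous g -> continuous h -> continuous (fun p => Rmin (g p) (h p)).
Proof.
move=> cg ch x. have := (@continuous_min R PT g h x (cg x) (ch x)).
by rewrite (_ : (fun p => Rmin (g p) (h p)) = (g \min h)%R) //; apply/funext => p; rewrite RminE.
Qed.
Lemma cplus (g h : PT -> R) : continuous g -> continuous h -> continuous (fun p => Rplus (g p) (h p)).
Proof. move=> cg ch x. apply: (@continuousD R R^o PT g h x); [exact: cg|exact: ch]. Qed.
Lemma copp (g : PT -> R) : continuous g -> continuous (fun p => Ropp (g p)).
Proof. move=> cg x. apply: (@continuousN R R^o PT g x); exact: cg. Qed.
Lemma cminus (g h : PT -> R) : continuous g -> continuous h -> continuous (fun p => Rminus (g p) (h p)).
Proof. move=> cg ch. exact: (cplus _ _ cg (copp _ ch)). Qed.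
Lemma ccst (c : R) : continuous (fun p : PT => c).
Proof. exact: cst_continuous. Qed.

Lemma cmaxl {A : Type} (L : list A) (G : A -> PT -> R) :
  (forall x, continuous (G x)) -> continuous (fun p => maxl (map (fun x => G x p) L)).
Proof.
move=> cG; elim: L => [|x L IH] /=; first exact: ccst.
exact: (cRmax _ _ (cG x) IH).
Qed.
Lemma csum {A : Type} (L : list A) (G : A -> PT -> R) :
  (forall x, continuous (G x)) -> continuous (fun p => sumR (map (fun x => G x p) L)).
Proof.
move=> cG; elim: L => [|x L IH] /=; first exact: ccst.
exact: (cplus _ _ (cG x) IH).
Qed.
Lemma cminl {A : Type} (L : list A) (G0 : PT -> R) (G : A -> PT -> R) :
  continuous G0 -> (forall x, continuous (G x)) ->
  continuous (fun p => minl (G0 p) (map (fun x => G x p) L)).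
Proof.
move=> c0 cG; elim: L => [|x L IH] /=; first exact: c0.
exact: (cRmin _ _ (cG x) IH).
Qed.

Lemma closed_le_c (g h : PT -> R) : continuous g -> continuous h -> closed [set p | Rle (g p) (h p)].
Proof.
move=> cg ch.
rewrite (_ : [set p | Rle (g p) (h p)] = (fun p => Rplus (h p) (Ropp (g p))) @^-1` [set x : R | (0 <= x)%R]).
  move: (cplus _ _ ch (copp _ cg)) => /continuous_closedP; apply; exact: closed_ge.
apply/funext => p /=. apply/propext; split => H.
 move/RleP: H. by rewrite -subr_ge0.
apply/RleP. by rewrite -subr_ge0.
Qed.
Lemma closed_ge_c (g h : PT -> R) : continuous g -> continuous h -> closed [set p | Rge (g p) (h p)].
Proof.
move=> cg ch.
rewrite (_ : [set p | Rge (g p) (h p)] = [set p | Rle (h p) (g p)]); first exact: closed_le_c.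
apply/funext => p /=. apply/propext; split => H; [exact: Rge_le | exact: Rle_ge].
Qed.
Lemma closed_all {I : Type} (B : I -> set PT) :
  (forall j, closed (B j)) -> closed [set p | forall j, B j p].
Proof.
move=> cB.
rewrite (_ : [set p | forall j, B j p] = \bigcap_(j in setT) B j); first by apply: closed_bigI => j _; exact: cB.
apply/funext => p /=. apply/propext; split => H j; first by move=> _; exact: H.
exact: H.
Qed.
Lemma closed_imp (P : Prop) (B : set PT) : closed B -> closed [set p | P -> B p].
Proof.
move=> cB. case: (pselect P) => HP.
  rewrite (_ : [set p | P -> B p] = B) //. apply/funext => p /=; apply/propext; split => H //.
  exact: H.
rewrite (_ : [set p | P -> B p] = setT); first exact: closedT.
apply/funext => p /=; apply/propext; split => H //.
Qed.
Lemma closed_and (B C : set PT) : closed B -> closed C -> closed [set p | B p /\ C p].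
Proof. move=> cB cC. exact: (closedI cB cC). Qed.
Lemma closed_true : closed [set _ : PT | True].
Proof. exact: closedT. Qed.

Lemma ex_min (A : (nat*nat) -> set R) (X : set PT) (f : PT -> R) :
  (forall c, compact (A c)) -> closed X -> continuous f ->
  (exists p, (forall c, A c (p c)) /\ X p) ->
  exists p, ((forall c, A c (p c)) /\ X p) /\
    forall q, (forall c, A c (q c)) -> X q -> Rle (f p) (f q).
Proof.
move=> cA cX cf [p0 Hp0].
have K : compact ([set p : PT | forall c, A c (p c)] `&` X).
  have T := @tychonoff _ (fun _ : nat*nat => R) A cA.
  exact: (compact_closedI T cX).
have := @compact_EVT_min PT R f _ _ K (@continuous_subspaceT _ _ _ f cf).
case. by exists p0.
move=> p /set_mem Hp Hmin. exists p; split => // q H1 H2.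
apply/RleP; apply: Hmin; exact/mem_set.
Qed.

Lemma compact_box S n e l c : compact [set x | boxP S n e l c x].
Proof.
rewrite /boxP; case: (relc S n c).
  rewrite (_ : [set x | Rle (e c.2) x /\ Rle x (l c.2)] = `[e c.2, l c.2]%classic); first exact: segment_compact.
  apply/funext => x /=; apply/propext; rewrite in_itv /=; split.
    by case=> /RleP -> /RleP ->.
  by case/andP => /RleP H1 /RleP H2.
exact: compact_set1.
Qed.

Lemma closed_chain th (s : nat) r : closed [set p : PT | chain_ok th (fun i => p (s, i)) r].
Proof.
elim: r => [|x r IH]; first exact: closed_true.
case: r IH => [|y r'] IH; first exact: closed_true.
have H1 := closed_ge_c _ _ (cminus _ _ (cproj (s, y)) (cproj (s, x)))
   (ccst (Rplus (ttime th x y) (serv th x))).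
exact: (closed_and _ _ H1 IH).
Qed.

Lemma closed_route e0 l0 th (s : nat) r :
  closed [set p : PT | route_ok e0 l0 th (fun i => p (s, i)) r].
Proof.
case: r => [|x r']; first exact: closed_true.
have H1 := closed_ge_c _ _ (cproj (s, x)) (ccst (Rplus e0 (ttime th 0%nat x))).
have H2 := closed_chain th s (x :: r').
have H3 := closed_le_c _ _ (cproj (s, List.last (x :: r') 0%nat))
   (ccst (Rminus (Rminus l0 (ttime th (List.last (x :: r') 0%nat) 0%nat)) (serv th (List.last (x :: r') 0%nat)))).
exact: (closed_and _ _ H1 (closed_and _ _ H2 H3)).
Qed.

Lemma closed_inX n e0 l0 th Rs lo hi (s : nat) :
  closed [set p : PT | inX n e0 l0 th Rs lo hi (fun i => p (s, i))].
Proof.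
have H1 := closed_all (fun i => [set p : PT | is_cust n i -> Rle 0 (p (s, i))])
   (fun i => closed_imp _ _ (closed_le_c _ _ (ccst 0) (cproj (s, i)))).
have H2 := closed_all (fun r => [set p : PT | In r Rs -> route_ok e0 l0 th (fun i => p (s, i)) r])
   (fun r => closed_imp _ _ (closed_route e0 l0 th s r)).
have H3 := closed_all (fun i => [set p : PT | is_cust n i -> Rle (lo i) (p (s, i)) /\ Rle (p (s, i)) (hi i)])
   (fun i => closed_imp _ _ (closed_and _ _ (closed_le_c _ _ (ccst (lo i)) (cproj (s, i)))
                                          (closed_le_c _ _ (cproj (s, i)) (ccst (hi i))))).
exact: (closed_and _ _ H1 (closed_and _ _ H2 H3)).
Qed.

Lemma closed_Xset n e0 l0 e l S theta Rs : closed (XsetP n e0 l0 e l S theta Rs).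
Proof.
exact: (closed_all (fun s => [set p : PT | is_scen S s -> inX n e0 l0 (theta s) (Rs s) e l (fun i => p (s, i))])
   (fun s => closed_imp _ _ (closed_inX n e0 l0 (theta s) (Rs s) e l s))).
Qed.

Lemma cont_F n disc w N ylo yhi S :
  continuous (fun p : PT => Fval n disc w N ylo yhi S (fun s i => p (s, i))).
Proof.
rewrite /Fval. apply cRmax.
- rewrite /Cpart. apply cmaxl => i. apply cmaxl => s1. apply cmaxl => s2.
  exact: (cminus _ _ (cminus _ _ (cproj _) (cproj _)) (ccst _)).
- rewrite /Dpart. apply csum => i. rewrite /gi.
  have Hh : forall b, continuous (fun p : PT => hib S ylo yhi (fun s i => p (s, i)) i b).
    move=> b. rewrite /hib. apply cplus.
    + apply cmaxl => s. exact: (cminus _ _ (cproj _) (ccst _)).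
    + apply cmaxl => s. exact: (cminus _ _ (ccst _) (cproj _)).
  exact: (cminl _ _ (fun b p => hib S ylo yhi (fun s i => p (s, i)) i b) (Hh 1%nat) Hh).
Qed.

Lemma Hmin_ex n e0 l0 Q e l disc w N ylo yhi S theta Rs :
  (forall s, is_scen S s -> in_calR n Q e0 l0 (theta s) e l (Rs s)) ->
  exists astar : nat -> nat -> R,
     (forall s, is_scen S s -> inX n e0 l0 (theta s) (Rs s) e l (astar s)) /\
     forall a, (forall s, is_scen S s -> inX n e0 l0 (theta s) (Rs s) e l (a s)) ->
       Rle (Fval n disc w N ylo yhi S astar) (Fval n disc w N ylo yhi S a).
Proof.
move=> HR.
have [a0 Ha0] := init_point n e0 l0 Q e l S theta Rs HR.
have := ex_min (fun c => [set x | boxP S n e l c x]) (XsetP n e0 l0 e l S theta Rs)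
  (fun p : PT => Fval n disc w N ylo yhi S (fun s i => p (s, i)))
  (compact_box S n e l) (closed_Xset n e0 l0 e l S theta Rs) (cont_F n disc w N ylo yhi S).
case.
  have [Tb [TX _]] := trunc_ok n e0 l0 Q e l disc w N ylo yhi S theta Rs a0 HR Ha0.
  by exists (trunc S n a0).
move=> p [[Hb HX] Hm]. exists (fun s i => p (s, i)). split; first exact: HX.
move=> a Ha.
have [Tb [TX TF]] := trunc_ok n e0 l0 Q e l disc w N ylo yhi S theta Rs a HR Ha.
rewrite -TF. exact: (Hm _ Tb TX).
Qed.

Open Scope R_scope.

Theorem mainTheorem3
  (n : nat) (e0 l0 Q : R) (e l : nat -> R)
  (disc : nat -> bool) (w : nat -> R) (N : nat -> nat) (ylo yhi : nat -> nat -> R)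
  (S : nat) (theta : nat -> param) (Rs : nat -> list (list nat))
  (Htw : tw_ok n e l disc w N ylo yhi)
  (Hpar : forall s, is_scen S s -> param_ok n (theta s))
  (HR : forall s, is_scen S s -> in_calR n Q e0 l0 (theta s) e l (Rs s)) :
  exists dstar : R,
    (exists a muhi mulo z,
       milp_feasible n e0 l0 e l disc w N ylo yhi S theta Rs dstar a muhi mulo z) /\
    (forall delta a muhi mulo z,
       milp_feasible n e0 l0 e l disc w N ylo yhi S theta Rs delta a muhi mulo z ->
       dstar <= delta) /\
    (dstar = 0 <->
     exists a : nat -> nat -> R,
       (forall s, is_scen S s -> inX n e0 l0 (theta s) (Rs s) e l (a s)) /\
       consistent n disc w N ylo yhi S a).
Proof.
exact: (main_from_min n e0 l0 Q e l disc w N ylo yhi S theta Rs Htw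
          (Hmin_ex n e0 l0 Q e l disc w N ylo yhi S theta Rs HR)).
Qed.
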